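(* The generalized student-proposing deferred acceptance algorithm with any of the LOCV, LOICV, HERF, or HEUF proposing methods is incentive compatible with certainty (IC-C).
   Context: Model: students $N$; colleges $M$, each college $c$ with positive integer capacity $x_c$ and strict preference $\succ_c$ over $N$; features $F$; utilities $u_s^f:M\to[0,1]$; for each student $s$ an independent distribution $\mu_s$ over weight vectors $w_s$ ($w_s^f\ge0$, $\sum_f w_s^f=1$). For realized $w_s$, $c\succeq_s^{w_s}c'$ iff $\sum_f w_s^fu_s^f(c)\ge\sum_f w_s^fu_s^f(c')$, strict version $\succ_s^{w_s}$; $\mathsf{null}$ ranked below any college. Generalized student-proposing DA: all students start unmatched with $R_s=\emptyset$; while some unmatched student $s$ has $R_s\ne M$, each such student proposes to $\mathsf{Next}(s,R_s)\notin R_s$ (computed from her reported utilities and distribution); each college keeps its $x_c$ most preferred students among those it holds and its new proposers and rejects the rest (rejected students add the college to $R_s$ and become unmatched). Output the final matching. HEUF: $\mathsf{Next}\in\arg\max_{c\notin R_s}\mathbb E[\sum_f w_s^fu_s^f(c)]$. LOCV: $q_s(c)$ = vector $(\Pr[c\succeq_s^{w_s}c'])_{c'\ne c}$ sorted ascending; colleges ordered by lexicographically larger $q_s$ first; $\mathsf{Next}$ returns first college in this order not in $R_s$. LOICV: same as LOCV but with vectors $(\Pr[c\succeq_s^{w_s}c'])_{c'\in M\setminus R_s,c'\ne c}$ recomputed for current $R_s$, returning the lexicographically largest college in $M\setminus R_s$. HERF: $\mathsf{Next}\in\arg\max_{c\notin R_s}\Pr[c\succeq_s^{w_s}c'\ \forall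 c'\notin R_s,c'\ne c]$. Ties are broken randomly or by a predetermined rule. IC-C: each student $s$ may report any $(u_s',\mu_s')$ instead of her true $(\{u_s^f\},\mu_s)$; with $\pi(s)$, $\pi'(s)$ her assignments under truthful report and misreport (others fixed), the algorithm is IC-C if $\Pr[\pi'(s)\succ_s^{w_s}\pi(s)]=1$ never occurs, the probability being over her true $w_s\sim\mu_s$ with true utilities. *)

(* Defs.v *)
From HB Require Import structures.
From mathcomp Require Import all_boot all_order all_algebra.
From mathcomp Require Import all_classical all_reals all_analysis.

Set Implicit Arguments.
Unset Strict Implicit.
Unset Printing Implicit Defensive.

Import Order.TTheory GRing.Theory Num.Theory.
Local Open Scope classical_set_scope.
Local Open Scope ring_scope.

(* Model.  A student's (reported or true) type is a pair (u, w):       *)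
(*   w : F -> Omega -> R  a random weight vector on the probability    *)
(*                        space (Omega, P); its law is mu_s.           *)

Section Model.
Context {R : realType} {d : measure_display} {Omega : measurableType d}.
Variable (P : probability Omega R).
Context {M F : finType}.

Definition score (u : F -> M -> R) (w : F -> Omega -> R) (c : M) (om : Omega) : R :=
  \sum_(f : F) w f om * u f c.

Definition wpref u w (c c' : M) (om : Omega) : Prop :=
  score u w c' om <= score u w c om.

(* strict preference over assignments, null (= None) below any college *)
Definition spref u w (o o' : option M) (om : Omega) : Prop :=
  match o, o' with
  | Some c, Some c' => score u w c' om < score u w c om
  | Some _, None => True
  | None, _ => False
  end.

Definition valid_type (u : F -> M -> R) (w : F -> Omega -> R) : Prop :=
  (forall f c, 0 <= u f c <= 1) /\
  (forall f, measurable_fun setT (w f)) /\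
  (forall f om, 0 <= w f om) /\
  (forall om, \sum_(f : F) w f om = 1).

Definition prge u w (c c' : M) : \bar R := P [set om | wpref u w c c' om].

Fixpoint lexle (s t : seq (\bar R)) : bool :=
  match s, t with
  | [::], _ => true
  | _ :: _, [::] => false
  | x :: s', y :: t' => ((x < y)%E) || ((x == y) && lexle s' t')
  end.

Definition sort_asc (s : seq (\bar R)) : seq (\bar R) :=
  sort (fun x y : \bar R => (x <= y)%E) s.

Definition qLOCV u w (c : M) : seq (\bar R) :=
  sort_asc [seq prge u w c c' | c' <- enum M & c' != c].

Definition qLOICV u w (Rs : {set M}) (c : M) : seq (\bar R) :=
  sort_asc [seq prge u w c c' | c' <- enum M & (c' \notin Rs) && (c' != c)].

Definition pHERF u w (Rs : {set M}) (c : M) : \bar R :=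
  P [set om | forall c', c' \notin Rs -> c' != c -> wpref u w c c' om].

Definition eHEUF u w (c : M) : \bar R :=
  (\int[P]_om (score u w c om)%:E)%E.

End Model.

Inductive method := LOCV | LOICV | HERF | HEUF.

(* [next_spec P m u w nx]: nx : {set M} -> M is a Next function of method m
   for the (reported) type (u, w): for every R_s <> M it returns a college
   outside R_s that is optimal for the method among colleges outside R_s
   (ties may be broken arbitrarily). *)
Definition next_spec {R : realType} {d} {Omega : measurableType d}
  (P : probability Omega R) {M F : finType} (m : method)
  (u : F -> M -> R) (w : F -> Omega -> R) (nx : {set M} -> M) : Prop :=
  forall Rs : {set M}, Rs != [set: M]%SET ->
    nx Rs \notin Rs /\
    forall c', c' \notin Rs ->
      match m with
      | LOCV => lexle (qLOCV P u w c') (qLOCV P u w (nx Rs))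
      | LOICV => lexle (qLOICV P u w Rs c') (qLOICV P u w Rs (nx Rs))
      | HERF => (pHERF P u w Rs c' <= pHERF P u w Rs (nx Rs))%E
      | HEUF => (eHEUF P u w c' <= eHEUF P u w (nx Rs))%E
      end.

(* State: for each student, the college holding her (None = unmatched) *)
(* and her rejection set R_s.                                          *)
Section DA.
Context {N M : finType}.
Variables (cap : M -> nat) (cpref : M -> rel N) (nx : N -> {set M} -> M).

Definition da_state := ((N -> option M) * (N -> {set M}))%type.

Definition da_init : da_state := (fun _ => None, fun _ => @finset.set0 M).

Definition proposes (st : da_state) (t : N) : bool :=
  (st.1 t == None) && (st.2 t != [set: M]%SET).

(* college currently considering t (holding her or receiving her proposal) *)
Definition cand (st : da_state) (t : N) : option M :=
  match st.1 t with
  | Some c => Some c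
  | None => if proposes st t then Some (nx t (st.2 t)) else None
  end.

Definition keeps (st : da_state) (c : M) (t : N) : bool :=
  (#|[set t' | (cand st t' == Some c) && cpref c t' t]%SET| < cap c)%N.

Definition da_step (st : da_state) : da_state :=
  (fun t => match cand st t with
            | Some c => if keeps st c t then Some c else None
            | None => None
            end,
   fun t => match cand st t with
            | Some c => if keeps st c t then st.2 t else (c |: st.2 t)%SET
            | None => st.2 t
            end).

Definition da_terminal (st : da_state) : bool :=
  [forall t, (st.1 t != None) || (st.2 t == [set: M]%SET)].

Definition da_outcome (pi : N -> option M) : Prop :=
  exists n, da_terminal (iter n da_step da_init) /\
            (iter n da_step da_init).1 = pi.

End DA.

Definition strict_total {N : finType} (r : rel N) : Prop :=
  irreflexive r /\ transitive r /\ (forall x y, x != y -> r x y || r y x).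

(* Main.v *)
Require Import Defs.
From HB Require Import structures.
From mathcomp Require Import all_boot all_order all_algebra.
From mathcomp Require Import all_classical all_reals all_analysis.
From mathcomp Require Import zify lra measurable_realfun.
Import Order.TTheory GRing.Theory Num.Theory.
Set Implicit Arguments.
Unset Strict Implicit.
Unset Printing Implicit Defensive.

Section Rank.
Context {T : finType} (r : rel T).
Hypotheses (Hirr : irreflexive r) (Htr : transitive r)
  (Htot : forall x y, x != y -> r x y || r y x).

Definition rk (G : {set T}) x := #|[set y in G | r y x]|.

Lemma rk_lt (G : {set T}) x y : x \in G -> r x y -> rk G x < rk G y.
Proof.
move=> xG rxy; apply: proper_card; apply/fintype.properP; split.
  by apply/fintype.subsetP=> z; rewrite !inE => /andP[-> rzx]; rewrite (Htr rzx rxy).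
by exists x; rewrite !inE ?xG ?rxy ?Hirr.
Qed.


Lemma rk_lt_card (G : {set T}) x : rk G x < #|G| \/ x \notin G.
Proof.
case xG: (x \in G); [left|by right].
apply: proper_card; apply/fintype.properP; split.
  by apply/fintype.subsetP=> z; rewrite !inE => /andP[].
by exists x; rewrite // !inE Hirr andbF.
Qed.

Lemma asym x y : r x y -> r y x -> False.
Proof. by move=> h1 h2; have := Htr h1 h2; rewrite Hirr. Qed.

Lemma worst (G : {set T}) : G != finset.set0 ->
  exists2 w, w \in G & forall y, y \in G -> y != w -> r y w.
Proof.
case/set0Pn=> x0 x0G.
case: (@arg_maxnP _ x0 (mem G) (rk G) x0G) => w wG wmax.
exists w => // y yG ynw.
case/orP: (Htot ynw) => // rwy.
have wG' : w \in G := wG.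
by have := wmax y yG; rewrite /= leqNgt (rk_lt wG' rwy).
Qed.

Lemma top_le (G : {set T}) k : #|[set x in G | rk G x < k]| <= k.
Proof.
set K := [set x in G | rk G x < k].
have [->|Kn0] := eqVneq K finset.set0; first by rewrite cards0.
case: (worst Kn0) => w wK wW.
move: (wK); rewrite inE => /andP[wG rkw].
have: #|K :\ w| <= rk G w.
  apply: subset_leq_card; apply/fintype.subsetP=> y; rewrite !inE => /andP[ynw].
  by move=> H; move: (H) => /andP[yG _]; rewrite yG wW // inE H.
move=> h; have e := finset.cardsD1 w K; rewrite wK add1n in e.
by rewrite e; apply: leq_ltn_trans h rkw.
Qed.

Lemma top_ge n (G : {set T}) k : #|G| = n -> k <= n ->
  k <= #|[set x in G | rk G x < k]|.
Proof.
elim: n G k => [|n IH] G k Gn kn.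
  by move: kn; rewrite leqn0 => /eqP ->.
have Gn0 : G != finset.set0 by apply/set0Pn; apply/card_gt0P; rewrite Gn.
case: (worst Gn0) => w wG wW.
have G'n : #|G :\ w| = n by move: Gn; rewrite (finset.cardsD1 w G) wG add1n => -[].
case: (ltngtP k n.+1) kn => // [klt|keq] _.
  apply: leq_trans (IH _ _ G'n klt) _.
  apply: subset_leq_card; apply/fintype.subsetP=> y; rewrite !inE => /andP[/andP[ynw yG]].
  suff -> : rk G y = rk (G :\ w) y by move=> ->; rewrite yG.
  rewrite /rk; apply: eq_card => z; rewrite !inE.
  case zw: (z == w); last by [].
  rewrite (eqP zw) wG /=; apply/negbTE/negP=> rwy.
  exact: (asym rwy (wW y yG ynw)).
rewrite keq -Gn; apply: subset_leq_card; apply/fintype.subsetP=> y yG.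
rewrite inE yG /=; case: (rk_lt_card G y) => //; by rewrite yG.
Qed.
End Rank.

Section Reach.
Context {M : finType} (f : {set M} -> M).
Definition rstep (X : {set M}) := if X == [set: _]%SET then X else f X |: X.
Definition seqR k := iter k rstep finset.set0.
Definition reach X := exists k, X = seqR k.

Lemma rstep_sub (X : {set M}) : X \subset rstep X.
Proof. by rewrite /rstep; case: ifP => _ //; apply: finset.subsetUr. Qed.

Lemma seqR_mono i j : i <= j -> seqR i \subset seqR j.
Proof.
move=> /subnK <-; elim: (j - i) => [|k IH]; first by rewrite add0n.
by rewrite addSn /seqR iterS; apply: fintype.subset_trans IH (rstep_sub _).
Qed.

Lemma reach_total (X Y : {set M}) : reach X -> reach Y -> X \subset Y \/ Y \subset X.
Proof.
move=> [i ->] [j ->]; case: (leqP i j) => h; first by left; apply: seqR_mono.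
by right; apply: seqR_mono; apply: ltnW.
Qed.

Lemma reach_next (X Y : {set M}) : reach X -> reach Y -> X \proper Y -> f X \in Y.
Proof.
move=> [i ->] [j ->] /fintype.properP[sub [z zj zi]].
case: (leqP j i) => h.
  by move: (fintype.subsetP (seqR_mono h) z zj); rewrite (negbTE zi).
have: seqR i.+1 \subset seqR j by apply: seqR_mono.
rewrite /seqR iterS -/(seqR i) /rstep.
case: ifP => [/eqP eT|_]; first by move: zi; rewrite eT inE.
by move/fintype.subsetP; apply; rewrite !inE eqxx.
Qed.

Lemma reach0 : reach finset.set0.
Proof. by exists 0. Qed.

Lemma reach_step (X : {set M}) : reach X -> X != [set: _]%SET -> reach (f X |: X).
Proof.
move=> [k ->] h; exists k.+1; rewrite /seqR iterS -/(seqR k) /rstep.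
by rewrite (negbTE h).
Qed.
End Reach.

Section Inv.
Context {N M : finType}.
Variables (cap : M -> nat) (cpref : M -> rel N) (nx : N -> {set M} -> M).
Hypothesis Hst : forall c, strict_total (cpref c).
Hypothesis Hnx : forall t X, X != [set: _]%SET -> nx t X \notin X.

Definition Inv (st : da_state) :=
 [/\ forall t c, st.1 t = Some c -> st.2 t != [set: _]%SET /\ nx t (st.2 t) = c,
     forall t, reach (nx t) (st.2 t),
     forall c, #|[set t | st.1 t == Some c]| <= cap c &
     forall t c, c \in st.2 t ->
        cap c <= #|[set t' | (st.1 t' == Some c) && cpref c t' t]| ].

Lemma inv_init : Inv da_init.
Proof.
split=> //=.
- by move=> t; apply: reach0.
- by move=> c; rewrite (_ : [set t | false] = finset.set0) ?cards0 //; apply/finset.setP=> x; rewrite !inE.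
- by move=> t c; rewrite inE.
Qed.

Notation step := (da_step cap cpref nx).
Notation pool st c := [set t | cand nx st t == Some c].

Lemma step1 st t c : ((step st).1 t == Some c) = (cand nx st t == Some c) && keeps cap cpref nx st c t.
Proof.
rewrite /da_step /=; case: (cand nx st t) => [c'|] //=.
case: (eqVneq c' c) => [->|ne]; first by case: (keeps _ _ _ _ c t); rewrite ?eqxx.
have -> : (Some c' == Some c) = false by apply/eqP=> -[]; apply/eqP.
by case: (keeps _ _ _ _ c' t) => //; apply/eqP=> -[]; apply/eqP.
Qed.

Lemma step2 st t c : c \in (step st).2 t -> c \in st.2 t \/ (cand nx st t = Some c /\ ~~ keeps cap cpref nx st c t).
Proof.
rewrite /da_step /=; case: (cand nx st t) => [c'|]; last by left.
case: ifP => k; first by left.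
by rewrite !inE => /orP[/eqP ->|]; [right; rewrite k|left].
Qed.

Lemma cand_some st t c : cand nx st t = Some c ->
  st.1 t = Some c \/ [/\ st.1 t = None, st.2 t != [set: _]%SET & nx t (st.2 t) = c].
Proof.
rewrite /cand /proposes; case: (st.1 t) => [c'|]; first by move=> ->; left.
by case: ifP => // /andP[_ h] [<-]; right.
Qed.

Lemma pool_top st c t : cap c <= #|[set t' | (cand nx st t' == Some c) && cpref c t' t]| ->
  cap c <= #|[set t' | ((step st).1 t' == Some c) && cpref c t' t]|.
Proof.
case: (Hst c) => Hirr [Htr Htot].
set Gt := [set t' | (cand nx st t' == Some c) && cpref c t' t].
move=> h; apply: leq_trans (top_ge Hirr Htr Htot (erefl #|Gt|) h) _.
apply: subset_leq_card; apply/fintype.subsetP=> x; rewrite !inE => /andP[xG rk].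
move: (xG) => /andP[xc xt]; rewrite step1 xc xt /= andbT.
rewrite /keeps; apply: leq_ltn_trans rk; apply: subset_leq_card.
apply/fintype.subsetP=> y; rewrite !inE => /andP[yc yx]; rewrite yc /= (Htr _ _ _ yx xt).
by rewrite yx.
Qed.

Lemma inv_step st : Inv st -> Inv (step st).
Proof.
case=> I1 I2 I3 I4; split.
- move=> t c /eqP; rewrite step1 => /andP[/eqP hc hk].
  have -> : (step st).2 t = st.2 t by rewrite /da_step /= hc hk.
  by case: (cand_some hc) => [/I1|[]].
- move=> t; rewrite /da_step /=; case hc: (cand nx st t) => [c|]; last exact: I2.
  case: ifP => _; first exact: I2.
  case: (cand_some hc) => [/I1 [h1 <-]|[_ h1 <-]]; exact: reach_step.
- move=> c; case: (Hst c) => Hirr [Htr Htot].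
  set G := [set t | cand nx st t == Some c].
  apply: leq_trans (top_le Hirr Htr Htot G (cap c)); apply: subset_leq_card.
  apply/fintype.subsetP=> t; rewrite !inE step1 => /andP[tc tk]; rewrite tc.
  move: tk; rewrite /keeps /rk /=; apply: leq_ltn_trans; apply: subset_leq_card; apply/fintype.subsetP=> y; rewrite !inE; exact: id.
- move=> t c /step2 [old|[hc hk]]; apply: pool_top.
    apply: leq_trans (I4 _ _ old) _; apply: subset_leq_card; apply/fintype.subsetP=> x.
    rewrite !inE => /andP[/eqP xc ->]; by rewrite andbT /cand xc.
  by move: hk; rewrite /keeps -leqNgt.
Qed.

Lemma inv_iter n : Inv (iter n step da_init).
Proof. by elim: n => [|n IH]; [apply: inv_init|rewrite iterS; apply: inv_step]. Qed.

End Inv.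

Lemma card_setP_sum {T : finType} (A : {set T}) (P : pred T) :
  #|[set t in A | P t]| = \sum_(t in A) (if P t then 1 else 0).
Proof. by rewrite -sum1dep_card big_mkcondr. Qed.

Lemma card_part {N M : finType} (f : N -> option M) (A : {set N}) (D : {set M}) :
  \sum_(d in D) #|[set t in A | f t == Some d]| =
  #|[set t in A | if f t is Some d then d \in D else false]|.
Proof.
rewrite card_setP_sum.
under eq_bigr => d _ do rewrite card_setP_sum.
rewrite exchange_big /=; apply: eq_bigr => t _.
case: (f t) => [d0|]; last by rewrite big1.
case d0D: (d0 \in D).
  rewrite (bigD1 d0) //= eqxx big1 // => d /andP[_ dd].
  by case: eqP => // -[e]; move: dd; rewrite e eqxx.
by rewrite big1 // => d dD; case: eqP => // -[e]; move: d0D; rewrite e dD.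
Qed.

Section Run.
Context {N M : finType}.
Variables (cap : M -> nat) (cpref : M -> rel N) (nx : N -> {set M} -> M).
Notation step := (da_step cap cpref nx).

Lemma R_mono (st : da_state) t : st.2 t \subset (step st).2 t.
Proof.
rewrite /da_step /=; case: (cand nx st t) => [c|] //.
by case: ifP => _ //; apply: finset.subsetUr.
Qed.

Lemma R_mono_iter (st : da_state) a b t : a <= b -> (iter a step st).2 t \subset (iter b step st).2 t.
Proof.
move=> /subnK <-; elim: (b - a) => [|k IH]; first by rewrite add0n.
by rewrite addSn iterS; apply: fintype.subset_trans IH (R_mono _ _).
Qed.

Lemma held_step (st : da_state) t c : (step st).1 t = Some c -> (step st).2 t = st.2 t.
Proof.
rewrite /da_step /=; case: (cand nx st t) => [c'|] //.
by case: ifP.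
Qed.

Lemma leave_step (st : da_state) t c : st.1 t = Some c -> (step st).1 t != Some c ->
  c \in (step st).2 t /\ (step st).1 t = None.
Proof.
rewrite /da_step /cand /= => ->; case: ifP => _; first by rewrite eqxx.
by rewrite !inE eqxx.
Qed.

Lemma arrive_step (st : da_state) t c : (step st).1 t = Some c -> st.1 t != Some c -> st.1 t = None.
Proof.
rewrite /da_step /cand /=; case: (st.1 t) => [c'|] //.
by case: ifP => // _ [->]; rewrite eqxx.
Qed.

Lemma held_const (st : da_state) a b t : a <= b ->
  (forall k, a < k <= b -> (iter k step st).1 t != None) ->
  (iter b step st).2 t = (iter a step st).2 t.
Proof.
elim: b => [|b IH] ab H; first by move: ab; rewrite leqn0 => /eqP ->.
case: (ltngtP a b.+1) ab => // [ab|<-] _; last by [].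
have := H b.+1; rewrite ab leqnn => /(_ isT).
rewrite iterS; case e: ((step (iter b step st)).1 t) => [c|] // _.
rewrite (held_step e) IH // => k /andP[ak kb]; apply: H; rewrite ak /=.
exact: leqW.
Qed.
End Run.

Section Stab.
Context {N M : finType}.
Variables (cap : M -> nat) (cpref : M -> rel N) (nx : N -> {set M} -> M).

Lemma inv_full st t c : Inv cap cpref nx st -> c \in st.2 t ->
  cap c <= #|[set h | st.1 h == Some c]|.
Proof.
case=> _ _ _ I4 /I4 h; apply: leq_trans h _; apply: subset_leq_card.
by apply/fintype.subsetP=> x; rewrite !inE => /andP[].
Qed.

Lemma inv_better st t c h : Inv cap cpref nx st -> c \in st.2 t ->
  st.1 h = Some c -> cpref c h t.
Proof.
move=> I; case: (I) => _ _ I3 I4 ct hc.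
set A := [set h | (st.1 h == Some c) && cpref c h t].
set B := [set h | st.1 h == Some c].
have AB : A \subset B by apply/fintype.subsetP=> x; rewrite !inE => /andP[].
have : A == B by rewrite finset.eqEcard AB /= (leq_trans (I3 c) (I4 _ _ ct)).
move/eqP=> e; have : h \in B by rewrite inE hc.
by rewrite -e inE => /andP[].
Qed.

Lemma term_none (st : da_state) t : @da_terminal N M st -> st.1 t = None -> st.2 t = [set: _]%SET.
Proof. by move=> /forallP /(_ t); case: (st.1 t) => //= /eqP. Qed.
End Stab.

Section SP.
Context {N M : finType}.
Variables (cap : M -> nat) (cpref : M -> rel N) (nx nx' : N -> {set M} -> M) (s : N).
Hypothesis Hst : forall c, strict_total (cpref c).
Hypothesis Hnx : forall t X, X != [set: _]%SET -> nx t X \notin X.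
Hypothesis Hsame : forall t, t != s -> nx' t = nx t.
Variables nA nB : nat.
Let stA k := iter k (da_step cap cpref nx) da_init.
Let fA := stA nA.
Let fB := iter nB (da_step cap cpref nx') da_init.
Hypotheses (termA : da_terminal fA) (termB : da_terminal fB).
Let mu := fA.1.
Let RA := fA.2.
Let mu' := fB.1.
Let RB := fB.2.
Let bad t := if mu' t is Some d then d \in RA t else false.

Let InvA k : Inv cap cpref nx (stA k). Proof. exact: inv_iter. Qed.
Let InvB : Inv cap cpref nx' fB. Proof. exact: inv_iter. Qed.

Let asym c x y : cpref c x y -> cpref c y x -> False.
Proof. by case: (Hst c) => Hirr [Htr _] h1 h2; have := Htr _ _ _ h1 h2; rewrite Hirr. Qed.

Lemma U1 t c : t != s -> c \in RA t -> ~~ bad t -> c \in RB t.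
Proof.
move=> ts cA nb; apply: contraT => cB.
case: (InvA nA) => _ I2A _ _; case: InvB => I1B I2B _ _.
have rA := I2A t; have rB := I2B t; rewrite Hsame // in rB.
case: (reach_total rA rB) => [/fintype.subsetP /(_ c cA)|sub]; first by rewrite (negbTE cB).
have pr : RB t \proper RA t by apply/fintype.properP; split => //; exists c.
have := reach_next rB rA pr.
case e: (mu' t) => [d|].
  by case: (I1B _ _ e) => _; rewrite Hsame // => ->; move: nb; rewrite /bad e => /negbTE ->.
by move: cB; rewrite /RB (term_none termB e) inE.
Qed.

Lemma U2 t c : t != s -> mu t = Some c -> ~~ bad t -> mu' t != Some c -> c \in RB t.
Proof.
move=> ts hc nb hc'; apply: contraT => cB.
case: (InvA nA) => I1A I2A _ _; case: InvB => I1B I2B _ _.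
have rA := I2A t; have rB := I2B t; rewrite Hsame // in rB.
case: (I1A _ _ hc) => nT ec.
have cnA : c \notin RA t by rewrite -ec; apply: Hnx.
have Hsome : forall d, mu' t = Some d -> d = nx t (RB t).
  by move=> d e; case: (I1B _ _ e) => _; rewrite Hsame.
case e: (mu' t) => [d|]; last first.
  by move: (term_none termB e) => eT; move: cB; rewrite /RB eT inE.
have dd := Hsome _ e.
have [eq|neq] := eqVneq (RA t) (RB t).
  by move: hc'; rewrite e dd -eq -/RA ec eqxx.
case: (reach_total rA rB) => sub.
  have pr : RA t \proper RB t by rewrite finset.properEneq neq.
  by move: cB; rewrite -ec (reach_next rA rB pr).
have pr : RB t \proper RA t by rewrite finset.properEneq eq_sym neq.
by move: nb; rewrite /bad e dd (reach_next rB rA pr).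
Qed.

Lemma SP c' : mu' s = Some c' -> c' \notin RA s.
Proof.
move=> hs; apply/negP => cA.
have bs : bad s by rewrite /bad hs.
case: (boolP [exists h, exists c, exists t1, [&& bad t1, mu' t1 == Some c,
   mu h == Some c, ~~ bad h & mu' h != Some c]]) =>
  [/existsP[h /existsP[c /existsP[t1 /and5P[b1 e1 eh nbh neh]]]] | nC1].
  have hs' : h != s by apply: contraNneq nbh => ->.
  have cB := U2 hs' (eqP eh) nbh neh.
  have c1 : c \in RA t1 by move: b1; rewrite /bad (eqP e1).
  have r1 := inv_better InvB cB (eqP e1).
  have r2 := inv_better (InvA nA) c1 (eqP eh).
  exact: asym r1 r2.
set S := [set t | bad t].
set D := [set d | [exists t1, bad t1 && (mu' t1 == Some d)]].
have allm : forall t, bad t -> exists2 d, mu t = Some d & d \in D.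
  have key : forall d, d \in D ->
      #|[set t in S | mu' t == Some d]| <= #|[set t in S | mu t == Some d]|.
    move=> d; rewrite inE => /existsP[t1 /andP[b1 e1]].
    have c1 : d \in RA t1 by move: b1; rewrite /bad (eqP e1).
    have fullA := inv_full (InvA nA) c1.
    case: InvB => _ _ I3B _; have capB := I3B d.
    set Hd := [set h | mu h == Some d]; set H'd := [set h | mu' h == Some d].
    have sub : Hd :\: S \subset H'd :\: S.
      apply/fintype.subsetP=> h; rewrite !inE => /andP[nbh eh]; rewrite nbh /=.
      apply: contraR nC1 => neh; apply/existsP; exists h; apply/existsP; exists d.
      by apply/existsP; exists t1; rewrite b1 e1 eh nbh neh.
    have e1' := finset.cardsID S Hd; have e2' := finset.cardsID S H'd.
    have le := subset_leq_card sub.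
    have -> : [set t in S | mu' t == Some d] = H'd :&: S.
      by apply/finset.setP=> x; rewrite !inE andbC.
    have -> : [set t in S | mu t == Some d] = Hd :&: S.
      by apply/finset.setP=> x; rewrite !inE andbC.
    have fullA' : cap d <= #|Hd| := fullA; have capB' : #|H'd| <= cap d := capB.
    lia.
  have sum1 := card_part mu S D; have sum2 := card_part mu' S D.
  have eS : [set t in S | if mu' t is Some d then d \in D else false] = S.
    apply/finset.setP=> t; rewrite !inE; case b: (bad t) => //=.
    move: (b); rewrite /bad; case e: (mu' t) => [d|] // _.
    by rewrite inE; apply/existsP; exists t; rewrite b e eqxx.
  have le : #|S| <= #|[set t in S | if mu t is Some d then d \in D else false]|.
    rewrite -sum1 -{1}eS -sum2; apply: leq_sum => d dD; exact: key.
  have eq : [set t in S | if mu t is Some d then d \in D else false] = S.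
    apply/eqP; rewrite finset.eqEcard le andbT; apply/fintype.subsetP => t; rewrite inE.
    by case/andP.
  move=> t bt; have : t \in [set t in S | if mu t is Some d then d \in D else false].
    by rewrite eq inE.
  by rewrite inE => /andP[_]; case: (mu t) => // d dD; exists d.
pose Pb k := [forall t in S, forall k' : 'I_nA.+1,
                (k <= k') ==> ((stA k').1 t == mu t)].
have PnA : Pb nA.
  apply/forallP=> t; apply/implyP=> _; apply/forallP=> k'; apply/implyP=> h.
  have -> : (k' : nat) = nA by apply/eqP; rewrite eqn_leq h -ltnS ltn_ord.
  by [].
case: (ex_minnP (ex_intro Pb nA PnA)) => k Pk kmin.
have knA : k <= nA := kmin _ PnA.
have PkE : forall t k', bad t -> k <= k' <= nA -> (stA k').1 t = mu t.
  move=> t k' bt /andP[h1 h2]; move/forallP: Pk => /(_ t) /implyP.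
  rewrite inE => /(_ bt) /forallP /(_ (Ordinal (h2 : k' < nA.+1))) /implyP.
  by move=> /(_ h1) /eqP.
case: k Pk kmin knA PkE => [|r] Pk kmin knA PkE.
  have := PkE s 0 bs (leq0n _); case: (allm s bs) => d -> _.
  by rewrite /stA /=.
have nPr : ~~ Pb r by apply/negP => /kmin; rewrite ltnn.
move: nPr; rewrite negb_forall => /existsP[t0]; rewrite negb_imply inE => /andP[bt0].
rewrite negb_forall => /existsP[k']; rewrite negb_imply => /andP[rk' ne0].
have k'r : (k' : nat) = r.
  apply/eqP; rewrite eqn_leq rk' andbT leqNgt; apply/negP => h.
  by move: ne0; rewrite PkE // ?eqxx // h /= -ltnS ltn_ord.
rewrite k'r in ne0.
set st := stA r.
have stS : stA r.+1 = da_step cap cpref nx st by rewrite /stA iterS.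
case: (allm t0 bt0) => c0 e0 c0D.
move: (c0D); rewrite inE => /existsP[t1 /andP[bt1 /eqP e1]].
have h0 : (da_step cap cpref nx st).1 t0 = Some c0 by rewrite -stS PkE // leqnn.
have n0 : st.1 t0 != Some c0 by rewrite -e0.
have z0 := arrive_step h0 n0.
case: (allm t1 bt1) => d1 e1' _.
have h1 : (da_step cap cpref nx st).1 t1 = Some d1 by rewrite -stS PkE // leqnn.
have RA1 : RA t1 = st.2 t1.
  rewrite -(held_step h1) -stS /RA /fA /stA.
  apply: held_const => // k'' /andP[lt le]; rewrite PkE // ?e1' //.
  by rewrite (ltnW lt).
have c0st : c0 \in st.2 t1 by rewrite -RA1; move: bt1; rewrite /bad e1.
set Old := [set h | st.1 h == Some c0].
set New := [set h | (da_step cap cpref nx st).1 h == Some c0].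
have capOld : cap c0 <= #|Old| := inv_full (InvA r) c0st.
have capNew : #|New| <= cap c0.
  by case: (InvA r.+1) => _ _ I3 _; move: (I3 c0); rewrite stS.
have : ~~ (Old \subset New).
  apply/negP=> sub.
  have sub' : t0 |: Old \subset New by rewrite finset.subUset sub finset.sub1set inE h0 eqxx.
  have := subset_leq_card sub'; rewrite finset.cardsU1 inE z0 /= add1n.
  by move=> h; have := leq_trans h capNew; rewrite ltnNge capOld.
case/fintype.subsetPn=> m; rewrite !inE => /eqP mo mn.
have better : cpref c0 m t1 := inv_better (InvA r) c0st mo.
case: (leave_step mo mn) => cm zm.
have nbm : ~~ bad m.
  apply/negP=> bm; case: (allm m bm) => dm em _.
  by move: zm; rewrite -stS PkE // ?leqnn // em.
have cAm : c0 \in RA m.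
  apply: (fintype.subsetP (@R_mono_iter _ _ cap cpref nx da_init r.+1 nA m knA)); by rewrite iterS.
have ms : m != s by apply: contraNneq nbm => ->.
have cBm := U1 ms cAm nbm.
have := inv_better InvB cBm e1.
by move=> h; exact: asym better h.
Qed.

End SP.

Local Open Scope classical_set_scope.
Local Open Scope ring_scope.

Section Prob.
Context {R : realType} {d : measure_display} {Omega : measurableType d}.
Variable (P : probability Omega R).
Context {M F : finType}.
Variables (U : F -> M -> R) (W : F -> Omega -> R).
Hypothesis HV : valid_type U W.

Local Notation sc c := (score U W c).

Lemma mscore c : measurable_fun setT (sc c).
Proof.
case: HV => _ [mW _]; rewrite /score.
apply: measurable_sum => f; exact: measurable_realfun.measurable_funM.
Qed.

Lemma mlt (f g : Omega -> R) : measurable_fun setT f -> measurable_fun setT g ->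
  measurable [set om | f om < g om].
Proof.
move=> mf mg; have mt : measurable [set true] by [].
have := measurable_realfun.measurable_fun_ltr mf mg measurableT mt.
by rewrite setTI.
Qed.

Lemma wpref_set c1 c2 : [set om | wpref U W c1 c2 om] = ~` [set om | sc c1 om < sc c2 om].
Proof.
apply/seteqP; split => om /=; rewrite /wpref leNgt; first by move=> /negP.
by move=> h; apply/negP.
Qed.

Lemma mwpref c1 c2 : measurable [set om | wpref U W c1 c2 om].
Proof. by rewrite wpref_set; apply: measurableC; apply: mlt; apply: mscore. Qed.

Lemma mE c1 c2 : measurable [set om | sc c1 om < sc c2 om].
Proof. by apply: mlt; apply: mscore. Qed.

Variables c c' : M.
Hypothesis E1 : P [set om | sc c om < sc c' om] = 1%E.
Let E := [set om | sc c om < sc c' om].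

Lemma nullC : P (~` E) = 0%E.
Proof. by rewrite probability_setC ?E1 ?subee //; apply: mE. Qed.

Lemma prge_cc' : prge P U W c c' = 0%E.
Proof. by rewrite /prge wpref_set nullC. Qed.

Lemma prge_c'c : prge P U W c' c = 1%E.
Proof.
apply/eqP; rewrite eq_le probability_le1 ?mwpref //=.
apply: (@le_trans _ _ (P E)); first by rewrite E1.
apply: le_measure; rewrite ?inE; [exact: mE|exact: mwpref|].
by move=> om /= h; rewrite /wpref ltW.
exact: mwpref.
Qed.

Lemma P_mono (A B : set Omega) : measurable A -> measurable B -> A `<=` B `|` ~` E ->
  (P A <= P B)%E.
Proof.
move=> mA mB sub; have mC : measurable (~` E) by apply: measurableC; apply: mE.
apply: (le_trans (le_measure _ _ _ sub)); rewrite ?inE //; first exact: measurableU.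
apply: (le_trans (measureU2 _ mB mC)).
set z := (X in (_ + X <= _)%E); have -> : z = 0%E by exact: nullC.
by rewrite adde0.
Qed.

Lemma prge_mono x : (prge P U W c x <= prge P U W c' x)%E.
Proof.
apply: P_mono; try exact: mwpref.
move=> om /=; rewrite /wpref => h.
case: (boolP (sc c om < sc c' om)) => [lt|nlt]; last by right; apply/negP.
by left; apply: le_trans h (ltW lt).
Qed.
End Prob.

Section Sets.
Context {T : Type} {I : eqType}.
Lemma bigI_mem (l : seq I) (p : pred I) (G : I -> set T) om :
  (\big[setI/setT]_(i <- l | p i) G i) om <-> (forall i, i \in l -> p i -> G i om).
Proof.
elim: l => [|a l IH]; first by rewrite big_nil; split.
rewrite big_cons; case: ifP => pa; split.
- move=> [ga /IH h] i; rewrite inE => /orP[/eqP ->|il] //; exact: h.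
- by move=> h; split; [apply: h; rewrite ?mem_head|apply/IH => i il; apply: h; rewrite inE il orbT].
- by move=> /IH h i; rewrite inE => /orP[/eqP ->|il]; [rewrite pa|apply: h].
- by move=> h; apply/IH => i il; apply: h; rewrite inE il orbT.
Qed.

Lemma bigU_mem (l : seq I) (p : pred I) (G : I -> set T) om :
  (\big[setU/set0]_(i <- l | p i) G i) om <-> (exists i, [/\ i \in l, p i & G i om]).
Proof.
elim: l => [|a l IH]; first by rewrite big_nil; split=> // -[i []].
rewrite big_cons; case: ifP => pa; split.
- case=> [ga|/IH [i [il pi gi]]]; first by exists a; rewrite mem_head.
  by exists i; rewrite inE il orbT.
- case=> i [] /[!inE] /orP[/eqP ->|il] pi gi; first by left.
  by right; apply/IH; exists i.
- by move=> /IH [i [il pi gi]]; exists i; rewrite inE il orbT.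
- case=> i [] /[!inE] /orP[/eqP ->|il] pi gi; first by rewrite pi in pa.
  by apply/IH; exists i.
Qed.
End Sets.

Lemma bigU_null {R : realType} {d : measure_display} {Omega : measurableType d}
  (P : probability Omega R) {I : eqType} (l : seq I) (p : pred I) (G : I -> set Omega) :
  (forall i, p i -> measurable (G i) /\ P (G i) = 0%E) ->
  P (\big[setU/set0]_(i <- l | p i) G i) = 0%E.
Proof.
move=> h; elim: l => [|a l IH]; first by rewrite big_nil measure0.
rewrite big_cons; case: ifP => pa //.
have mrest : measurable (\big[setU/set0]_(i <- l | p i) G i).
  by apply: bigsetU_measurable => i /h [].
case: (h a pa) => ma Pa.
apply/eqP; rewrite eq_le measure_ge0 andbT.
apply: le_trans (measureU2 _ ma mrest) _.
set x := (X in (_ + X <= _)%E); set y := (X in (X + _ <= _)%E).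
have -> : x = 0%E by exact: IH.
have -> : y = 0%E by exact: Pa.
by rewrite adde0.
Qed.

Section Methods.
Context {R : realType} {d : measure_display} {Omega : measurableType d}.
Variable (P : probability Omega R).
Context {M F : finType}.
Variables (U : F -> M -> R) (W : F -> Omega -> R).
Hypothesis HV : valid_type U W.
Variables (Rs : {set M}) (c c' : M).
Hypotheses (cR : c \notin Rs) (c'R : c' \notin Rs) (cc : c' != c).
Hypothesis E1 : P [set om | score U W c om < score U W c' om] = 1%E.

Lemma herf_contra :
  (forall x, x \notin Rs -> (pHERF P U W Rs x <= pHERF P U W Rs c)%E) -> False.
Proof.
move=> spec.
pose H x := [set om | forall c'', c'' \notin Rs -> c'' != x -> wpref U W x c'' om].
have HE x : H x = \big[setI/setT]_(i <- enum M | (i \notin Rs) && (i != x))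
                    [set om | wpref U W x i om].
  apply/seteqP; split=> om /=.
    by move=> h; apply/bigI_mem => i _ /andP[a b]; exact: h.
  by move/bigI_mem => h c'' a b; apply: h; rewrite ?mem_enum ?a ?b.
have mH x : measurable (H x).
  by rewrite HE; apply: bigsetI_measurable => i _; exact: mwpref.
have Hc0 : P (H c) = 0%E.
  apply/eqP; rewrite eq_le measure_ge0 andbT.
  have <- : prge P U W c c' = 0%E by exact: prge_cc'.
  apply: le_measure; rewrite ?inE //; first exact: mwpref.
  by move=> om /= h; apply: h.
have Hx0 x : x \notin Rs -> measurable (H x) /\ P (H x) = 0%E.
  move=> xR; split => //; apply/eqP; rewrite eq_le measure_ge0 andbT.
  by rewrite -Hc0; exact: spec.
have cover : [set: Omega] `<=` \big[setU/set0]_(i <- enum M | i \notin Rs) H i.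
  move=> om _; apply/bigU_mem.
  case: (@arg_maxP _ _ _ c (fun i => i \notin Rs) (fun i => score U W i om) cR) => x xR xmax.
  exists x; split; rewrite ?mem_enum // => c'' c''R _; rewrite /wpref; exact: xmax.
have := @bigU_null _ _ _ P _ (enum M) (fun i => i \notin Rs) H Hx0.
move=> h0; have : (P [set: Omega] <= 0)%E.
  rewrite -h0; apply: le_measure; rewrite ?inE //; apply: bigsetU_measurable => i _; exact: mH.
by rewrite probability_setT lee_fin ler10.
Qed.
End Methods.

Section Lex.
Context {R : realType}.
Local Open Scope ereal_scope.

Lemma lex_count (sa sb : seq (\bar R)) :
  sorted (fun x y => x <= y) sa -> sorted (fun x y => x <= y) sb -> size sa = size sb ->
  (forall z : \bar R, (count (fun y => (z <= y)%E) sa <= count (fun y => (z <= y)%E) sb)%N) ->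
  (exists z : \bar R, (count (fun y => (z <= y)%E) sa < count (fun y => (z <= y)%E) sb)%N) ->
  ~~ lexle sb sa.
Proof.
elim: sa sb => [|x sa IH] [|y sb] //= ssa ssb sz H [z hz].
- by move: hz; rewrite ltnn.
- have sz' : size sa = size sb by case: sz.
  have allx : all (fun v => x <= v) sa by apply: order_path_min => //; exact: le_trans.
  have xy : x <= y.
    rewrite leNgt; apply/negP => yx.
    have cx : count (fun v => x <= v) sa = size sa by apply/eqP; rewrite -all_count.
    have := H x; rewrite /= lexx cx (lt_geF yx) add0n add1n.
    by move=> h; have := leq_trans h (count_size _ _); rewrite -sz' ltnn.
  rewrite negb_or (le_gtF xy) /=.
  case: (eqVneq y x) => [e|] //=; rewrite e in hz H *.
  apply: IH; first exact: path_sorted ssa.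
  - exact: path_sorted ssb.
  - exact: sz'.
  - by move=> z'; have := H z'; rewrite /= leq_add2l.
  - by exists z; move: hz; rewrite /= ltn_add2l.
Qed.
End Lex.

Lemma cnt_enum (M : finType) (a : pred M) : count a (enum M) = #|[set x | a x]%SET|.
Proof.
rewrite cardsE cardE /enum_mem size_filter /= count_filter; apply: eq_count => x.
by rewrite /= andbT.
Qed.

Section LexMethod.
Context {R : realType} {d : measure_display} {Omega : measurableType d}.
Variable (P : probability Omega R).
Context {M F : finType}.
Variables (U : F -> M -> R) (W : F -> Omega -> R).
Hypothesis HV : valid_type U W.
Variables (c c' : M).
Hypotheses (cc : c' != c).
Hypothesis E1 : P [set om | score U W c om < score U W c' om] = 1%E.
Variable keep : pred M.
Hypotheses (kc : keep c) (kc' : keep c').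
Let L x := [seq prge P U W x y | y <- enum M & keep y && (y != x)].

Let p0 : prge P U W c c' = 0%E. Proof. exact: prge_cc'. Qed.
Let p1 : prge P U W c' c = 1%E. Proof. exact: prge_c'c. Qed.
Let pm x : (prge P U W c x <= prge P U W c' x)%E. Proof. exact: prge_mono. Qed.

Lemma lex_method : lexle (sort_asc (L c')) (sort_asc (L c)) -> False.
Proof.
move=> h; suff : ~~ lexle (sort_asc (L c')) (sort_asc (L c)) by rewrite h.
have cntL x (q : pred (\bar R)) : count q (sort_asc (L x)) =
    #|[set y | (keep y && (y != x)) && q (prge P U W x y)]%SET|.
  rewrite /sort_asc count_sort.
  rewrite count_map count_filter cnt_enum; apply: eq_card => y; rewrite !inE.
  by rewrite andbC.
pose A z := [set y | (keep y && (y != c)) && (z <= prge P U W c y)%E]%SET.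
pose B z := [set y | (keep y && (y != c')) && (z <= prge P U W c' y)%E]%SET.
pose f y := if y == c' then c else y.
have injf z : {in A z &, injective f}.
  move=> x y; rewrite /A !inE /f => /andP[/andP[_ xc] _] /andP[/andP[_ yc] _].
  case: (eqVneq x c') => [->|xc']; case: (eqVneq y c') => [->|yc'] //.
  - by move=> e; move: yc; rewrite -e eqxx.
  - by move=> e; move: xc; rewrite e eqxx.
have subf z : (f @: A z \subset B z)%SET.
  apply/fintype.subsetP=> y /imsetP[x]; rewrite /A /B !inE /f => /andP[/andP[kx xc] zx] ->.
  case: (eqVneq x c') => [xe|xc'].
    rewrite kc eq_sym cc /= p1; apply: le_trans zx _.
    by rewrite xe p0 lee01.
  by rewrite kx xc' /=; apply: le_trans zx (pm x).
have dom z : (#|A z| <= #|B z|)%N.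
  by rewrite -(card_in_imset (injf z)); apply: subset_leq_card.
have strict : (#|A 1%E| < #|B 1%E|)%N.
  rewrite -(card_in_imset (injf _)); apply: proper_card; apply/properP; split => //.
  exists c; first by rewrite /B !inE kc eq_sym cc p1 lexx.
  apply/imsetP=> -[x]; rewrite /A !inE /f => /andP[/andP[kx xc] zx].
  case: (eqVneq x c') => [xe|xc' e]; last by move: xc; rewrite e eqxx.
  by move: zx; rewrite xe p0 lee_fin ler10.
have sizeL x : keep x -> size (sort_asc (L x)) = (#|[set y | keep y]%SET| - 1)%N.
  move=> kx; rewrite -(count_predT (sort_asc (L x))) cntL.
  rewrite (cardsD1 x [set y | keep y]%SET) inE kx add1n subSS subn0.
  by apply: eq_card => y; rewrite !inE andbT andbC.
apply: lex_count.
- by apply: sort_sorted; exact: le_total.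
- by apply: sort_sorted; exact: le_total.
- by rewrite !sizeL.
- by move=> z; rewrite !cntL; apply: dom.
- by exists 1%E; rewrite !cntL; apply: strict.
Qed.
End LexMethod.

Section Heuf.
Context {R : realType} {d : measure_display} {Omega : measurableType d}.
Variable (P : probability Omega R).
Context {M F : finType}.
Variables (U : F -> M -> R) (W : F -> Omega -> R).
Hypothesis HV : valid_type U W.
Variables (c c' : M).
Hypothesis E1 : P [set om | score U W c om < score U W c' om] = 1%E.
Local Notation sc c := (score U W c).

Lemma sc_bound x om : 0 <= sc x om <= 1.
Proof.
case: HV => Hu [_ [Hw Hs]]; rewrite /score; apply/andP; split.
  by apply: sumr_ge0 => f _; apply: mulr_ge0 => //; case/andP: (Hu f x).
rewrite -(Hs om); apply: ler_sum => f _; rewrite -[leRHS]mulr1.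
by apply: ler_wpM2l => //; case/andP: (Hu f x).
Qed.

Lemma sc_int x : P.-integrable setT (fun om => (sc x om)%:E).
Proof.
apply: (@le_integrable _ _ _ P setT measurableT _ (EFin \o cst 1)).
- by apply/measurable_realfun.measurable_EFinP; exact: mscore.
- move=> om _ /=; rewrite lee_fin normr1.
  by case/andP: (sc_bound x om) => a b; rewrite ger0_norm.
- exact: finite_measure_integrable_cst.
Qed.

Lemma heuf_contra : (eHEUF P U W c' <= eHEUF P U W c)%E -> False.
Proof.
move=> le.
set E := [set om | sc c om < sc c' om].
have mE' : measurable E by exact: mE.
pose g om := sc c' om - sc c om.
have mg : measurable_fun setT g.
  by apply: measurable_realfun.measurable_funB; exact: mscore.
have ig : P.-integrable setT (EFin \o g).
  apply: (@le_integrable _ _ _ P setT measurableT _ (EFin \o cst 1)).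
  - by apply/measurable_realfun.measurable_EFinP.
  - move=> om _ /=; rewrite lee_fin normr1 /g.
    case/andP: (sc_bound c om) => a1 b1; case/andP: (sc_bound c' om) => a2 b2.
    by rewrite ler_norml; apply/andP; split; lra.
  - exact: finite_measure_integrable_cst.
have eq1 : eHEUF P U W c' = (eHEUF P U W c + \int[P]_om (EFin \o g) om)%E.
  rewrite /eHEUF -(@integralD_EFin _ _ _ P setT measurableT (sc c) g (sc_int c) ig).
  by apply: eq_integral => om _ /=; rewrite /g -EFinD addrC subrK.
have mC : measurable (~` E) by apply: measurableC.
have nC : P (~` E) = 0%E by exact: nullC.
have gpos : (0 < \int[P]_om (EFin \o g) om)%E.
  rewrite (negligible_integral mC measurableT ig nC) setTD setCK.
  have mgE : measurable_fun E (fun x => (g x)%:E).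
    by apply: (measurable_funS measurableT) => //; apply/measurable_realfun.measurable_EFinP.
  rewrite (eq_integral (fun om => `|(EFin \o g) om|%E)); last first.
    move=> om; rewrite inE /E /= => h; rewrite ger0_norm // /g subr_ge0.
    exact: ltW.
  pose Fk (n : nat) := E `&` [set x | ((n.+1%:R)^-1)%:E <= `|(EFin \o g) x|]%E.
  have mF n : measurable (Fk n).
    by apply: emeasurable_fun_c_infty => //; exact: measurableT_comp.
  have [n Pn] : exists n, P (Fk n) != 0%E.
    apply: contrapT => hn.
    have h0 n : P (Fk n) = 0%E.
      by apply/eqP; apply/negPn/negP => hn'; apply: hn; exists n.
    have negE : P.-negligible E.
      apply: (@negligibleS _ _ _ _ (\bigcup_k Fk k)).
        move=> om Eom; have gp : 0 < g om by rewrite /g subr_gt0.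
        exists (Num.Def.trunc (g om)^-1) => //; split => //=.
        rewrite lee_fin ger0_norm ?(ltW gp) //.
        apply: ltW; rewrite invf_plt ?posrE //; first exact: truncnS_gt.
      by apply: negligible_bigcup => k; apply/negligibleP => //; exact: h0.
    have := (negligibleP _ mE').1 negE.
    move=> h; have := etrans (esym E1) h.
    by move/eqP; rewrite onee_eq0.
  apply: lt_le_trans (@le_integral_abse _ _ _ P E mE' _ ((n.+1%:R)^-1) mgE _); last first.
    by rewrite invr_gt0 ltr0Sn.
  apply: mule_gt0; first by rewrite lte_fin invr_gt0 ltr0Sn.
  by rewrite lt0e Pn measure_ge0.
have fin : eHEUF P U W c \is a fin_num.
  exact: (integrable_fin_num measurableT (sc_int c)).
move: le; rewrite eq1 leNgt lteDl // gpos.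
by [].
Qed.
End Heuf.

Theorem theorem6
  (R : realType) (d : measure_display) (Omega : measurableType d)
  (P : probability Omega R) (N M F : finType)
  (cap : M -> nat) (cpref : M -> rel N)
  (m : method)
  (u : N -> F -> M -> R) (w : N -> F -> Omega -> R)
  (s : N) (u' : F -> M -> R) (w' : F -> Omega -> R)
  (nx nx' : N -> {set M} -> M)
  (pi pi' : N -> option M) :
  (forall c, (0 < cap c)%N) ->
  (forall c, strict_total (cpref c)) ->
  (forall t, valid_type (u t) (w t)) ->
  valid_type u' w' ->
  (forall t, next_spec P m (u t) (w t) (nx t)) ->
  next_spec P m u' w' (nx' s) ->
  (forall t, t != s -> nx' t = nx t) ->
  da_outcome cap cpref nx pi ->
  da_outcome cap cpref nx' pi' ->
  P [set om | spref (u s) (w s) (pi' s) (pi s) om] <> 1%E.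
Proof.
move=> capP Hst HV HV' Hnx Hnx' Hsame [nA [termA eA]] [nB [termB eB]].
have Hnxs : forall t (X : {set M}), X != [set: M]%SET -> nx t X \notin X.
  by move=> t X h; case: (Hnx t X h).
pose stA := iter nA (da_step cap cpref nx) da_init.
case e' : (pi' s) => [c'|]; last first.
  rewrite /spref /= (_ : [set om | False] = set0); last by apply/seteqP; split.
  by rewrite measure0 => /esym /eqP; rewrite onee_eq0.
have nA' : c' \notin stA.2 s.
  by apply: (SP Hst Hnxs Hsame termA termB); rewrite eB.
case: (inv_iter cap nx Hst nA) => I1 _ _ _.
case e : (pi s) => [c|]; last first.
  have h : stA.1 s = None by rewrite /stA eA.
  by move: nA'; rewrite (term_none termA h) inE.
have hc : stA.1 s = Some c by rewrite /stA eA.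
have [neT nxc] := I1 s c hc.
have [_ spec] := Hnx s _ neT.
have cR : c \notin stA.2 s by rewrite -nxc; apply: Hnxs.
case: (eqVneq c' c) => [ec|cc].
  rewrite ec /spref (_ : [set om | _ < _] = set0); last first.
    by apply/seteqP; split => om //=; rewrite ltxx.
  by rewrite measure0 => /esym /eqP; rewrite onee_eq0.
rewrite /spref => E1.
have sp := spec c' nA'; rewrite nxc in sp.
destruct m.
- exact: (lex_method (HV s) cc E1 (keep := fun _ => true) isT isT sp).
- exact: (lex_method (HV s) cc E1 (keep := fun y => y \notin stA.2 s) cR nA' sp).
- apply: (herf_contra (HV s) cR nA' cc E1) => x xR.
  by have := spec x xR; rewrite nxc.
- exact: (heuf_contra (HV s) E1 sp).
Qed.
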